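(* Let $\epsilon$ and $\epsilon'$ be two sign assignments on a poset $(S,\triangleleft)$. If $\mathrm H^1_{\rm CW}(\mathscr K(S,\triangleleft);\mathbb Z_2)=0$, then there is an isomorphism of sign assignments from $\epsilon$ to $\epsilon'$, i.e. a map $\eta\colon S\to\mathbb Z_2$ such that $\eta(x)+\epsilon'_{x,y}\equiv\epsilon_{x,y}+\eta(y)\pmod 2$ for all covering pairs $x\,\tilde\triangleleft\,y$.
   Context: In a poset, $x\,\tilde\triangleleft\,y$ ($y$ covers $x$) means $x\triangleleft y$ with no element strictly between. A square consists of $x,y,y',z$ with $y\neq y'$, $x\,\tilde\triangleleft\,y\,\tilde\triangleleft\,z$ and $x\,\tilde\triangleleft\,y'\,\tilde\triangleleft\,z$. A sign assignment assigns $\epsilon_{x,y}\in\mathbb Z_2$ to each covering pair such that $\epsilon_{x,y}+\epsilon_{y,z}\equiv\epsilon_{x,y'}+\epsilon_{y',z}+1\pmod 2$ for every square. $\mathscr K(S,\triangleleft)$ is the CW-complex obtained from the geometric realization of the Hasse graph of $S$ (vertices the elements of $S$, an edge for each covering pair) by attaching a $2$-cell along each square; $\mathrm H^*_{\rm CW}(-;\mathbb Z_2)$ is its cellular cohomology with $\mathbb Z_2$ coefficients. *)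

(* Defs.v *)
From HB Require Import structures.
From mathcomp Require Import all_boot all_order all_algebra.
Set Implicit Arguments. Unset Strict Implicit. Unset Printing Implicit Defensive.
Import Order.TTheory GRing.Theory.
Local Open Scope order_scope.

Definition covers (d : Order.disp_t) (S : porderType d) (x y : S) : Prop :=
  x < y /\ ~ (exists w : S, x < w /\ w < y).

Definition is_square (d : Order.disp_t) (S : porderType d) (x y y' z : S) : Prop :=
  y <> y' /\ covers x y /\ covers y z /\ covers x y' /\ covers y' z.

Local Open Scope ring_scope.

(* Sign assignment: epsilon : S -> S -> Z_2, only its values on covering pairs matter. *)
Definition sign_assignment (d : Order.disp_t) (S : porderType d) (eps : S -> S -> 'Z_2) : Prop :=
  forall x y y' z : S, is_square x y y' z ->
    eps x y + eps y z = eps x y' + eps y' z + 1.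

(* Cellular cochain complex of K(S) with Z_2 coefficients:
   C^0 = functions on vertices (elements of S),
   C^1 = functions on edges (covering pairs), represented by S -> S -> 'Z_2,
   C^2 = functions on 2-cells (squares). *)
Definition delta0 (d : Order.disp_t) (S : porderType d) (eta : S -> 'Z_2) : S -> S -> 'Z_2 :=
  fun x y => eta x + eta y.

Definition delta1 (d : Order.disp_t) (S : porderType d) (c : S -> S -> 'Z_2)
  (x y y' z : S) : 'Z_2 :=
  c x y + c y z + c x y' + c y' z.

Definition cocycle1 (d : Order.disp_t) (S : porderType d) (c : S -> S -> 'Z_2) : Prop :=
  forall x y y' z : S, is_square x y y' z -> delta1 c x y y' z = 0.

Definition coboundary1 (d : Order.disp_t) (S : porderType d) (c : S -> S -> 'Z_2) : Prop :=
  exists eta : S -> 'Z_2, forall x y : S, covers x y -> c x y = delta0 eta x y.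

Definition H1_CW_trivial (d : Order.disp_t) (S : porderType d) : Prop :=
  forall c : S -> S -> 'Z_2, cocycle1 c -> coboundary1 c.

(* Main.v *)
Require Import Defs.
From mathcomp Require Import all_boot all_order all_algebra.
From mathcomp Require Import ring.
Import Order.TTheory GRing.Theory.
Local Open Scope ring_scope.

Lemma z2_dbl (a : 'Z_2) : a + a = 0.
Proof. by case: a => -[|[|n]] H; apply/val_inj. Qed.

Theorem proposition3p14 (d : Order.disp_t) (S : porderType d)
  (eps eps' : S -> S -> 'Z_2) :
  sign_assignment eps -> sign_assignment eps' -> H1_CW_trivial S ->
  exists eta : S -> 'Z_2, forall x y : S, covers x y ->
    eta x + eps' x y = eps x y + eta y.
Proof.
move=> He He' H.
have [eta Heta] : coboundary1 (fun x y => eps x y + eps' x y).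
  apply: H => x y y' z sq; rewrite /delta1.
  have E : forall a b c e a' b' c' e' : 'Z_2,
    a + a' + (b + b') + (c + c') + (e + e') = (a + b) + (c + e) + ((a' + b') + (c' + e')) by move=> *; ring.
  rewrite E (He x y y' z sq) (He' x y y' z sq).
  move: (eps x y' + eps y' z) (eps' x y' + eps' y' z) => p q.
  by case: p => -[|[|n]] ?; case: q => -[|[|m]] ?; apply/val_inj.
exists eta => x y cxy; move: (Heta x y cxy); rewrite /delta0 => h.
have -> : eps x y = eps x y + eps' x y + eps' x y by rewrite -addrA z2_dbl addr0.
rewrite h.
have E : forall a b c : 'Z_2, a + b + c + b = a + c + (b + b) by move=> *; ring.
by rewrite E z2_dbl addr0.
Qed.
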